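(* Let $\mathcal{N}$ be a nest in a complex Hilbert space $H$ with $\dim H\ge 2$, and let $\mathcal{A}=\mathcal{T}(\mathcal{N})$ be the associated nest algebra. Then $\operatorname{JCent}(\mathcal{A})=\operatorname{Cent}(\mathcal{A})$.
   Context: A nest is a chain $\mathcal{N}$ of closed subspaces of $H$ containing $\{0\}$ and $H$, closed under arbitrary intersections and closed linear spans. The nest algebra is $\mathcal{T}(\mathcal{N})=\{T\in\mathcal{B}(H): T(N)\subseteq N \text{ for all } N\in\mathcal{N}\}$, where $\mathcal{B}(H)$ is the algebra of bounded operators on $H$. $x\circ y=xy+yx$. $\operatorname{JCent}(\mathcal{A})$: linear $f:\mathcal{A}\to\mathcal{A}$ with $f(x\circ y)=f(x)\circ y$ for all $x,y$. $\operatorname{Cent}(\mathcal{A})$: linear $f$ with $f(xy)=f(x)y=xf(y)$ for all $x,y$. *)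

(* Defs.v *)
From HB Require Import structures.
From mathcomp Require Import all_boot all_order all_algebra.
From mathcomp Require Import all_classical all_reals all_analysis.
From mathcomp Require Export complex.
Import numFieldNormedType.Exports.
Set Implicit Arguments. Unset Strict Implicit. Unset Printing Implicit Defensive.
Import Order.TTheory GRing.Theory Num.Theory.
Local Open Scope classical_set_scope.
Local Open Scope ring_scope.

Section Defs.
Variable R : realType.
Variable H : normedModType R[i].

(* ip is an inner product inducing the norm of H: linear in the first
   argument, conjugate symmetric, and <x,x> = ||x||^2.  Together with
   completeness of H this makes H a complex Hilbert space. *)
Definition is_inner_product (ip : H -> H -> R[i]) : Prop :=
  [/\ forall (a : R[i]) (x y z : H), ip (a *: x + y) z = a * ip x z + ip y z,
      forall x y : H, ip y x = (ip x y)^*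
    & forall x : H, ip x x = (`|x| : R[i]) ^+ 2].

Definition dim_ge2 : Prop :=
  exists x y : H, forall a b : R[i], a *: x + b *: y = 0 -> a = 0 /\ b = 0.

(* bounded (= continuous) linear operators on H *)
Definition bounded_op (T : H -> H) : Prop :=
  (forall (a : R[i]) (x y : H), T (a *: x + y) = a *: T x + T y) /\ continuous T.

Definition closed_subspace (S : set H) : Prop :=
  [/\ S 0, (forall (a : R[i]) (x y : H), S x -> S y -> S (a *: x + y)) & closed S].

Definition closed_span (F : set (set H)) : set H :=
  \bigcap_(S in [set S | closed_subspace S /\ \bigcup_(M in F) M `<=` S]) S.

Definition nest (N : set (set H)) : Prop :=
  [/\ forall M, N M -> closed_subspace M,
      N [set 0] /\ N setT,
      forall M1 M2, N M1 -> N M2 -> M1 `<=` M2 \/ M2 `<=` M1,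
      forall F, F `<=` N -> N (\bigcap_(M in F) M)
    & forall F, F `<=` N -> N (closed_span F)].

Definition nest_algebra (N : set (set H)) : set (H -> H) :=
  [set T | bounded_op T /\ forall M x, N M -> M x -> M (T x)].

Definition op_mul (S T : H -> H) : H -> H := fun x => S (T x).
Definition op_add (S T : H -> H) : H -> H := fun x => S x + T x.
Definition op_scale (a : R[i]) (T : H -> H) : H -> H := fun x => a *: T x.
Definition op_jordan (S T : H -> H) : H -> H := op_add (op_mul S T) (op_mul T S).

(* linear maps A -> A (values outside A are irrelevant) *)
Definition linear_on (A : set (H -> H)) (f : (H -> H) -> (H -> H)) : Prop :=
  (forall x, A x -> A (f x)) /\
  (forall (a : R[i]) x y, A x -> A y ->
     f (op_add (op_scale a x) y) = op_add (op_scale a (f x)) (f y)).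

Definition JCent (A : set (H -> H)) (f : (H -> H) -> (H -> H)) : Prop :=
  linear_on A f /\
  forall x y, A x -> A y -> f (op_jordan x y) = op_jordan (f x) y.

Definition Cent (A : set (H -> H)) (f : (H -> H) -> (H -> H)) : Prop :=
  linear_on A f /\
  forall x y, A x -> A y ->
    f (op_mul x y) = op_mul (f x) y /\ f (op_mul x y) = op_mul x (f y).

End Defs.

(* Main.v *)
Require Import Defs.
From HB Require Import structures.
From mathcomp Require Import all_boot all_order all_algebra.
From mathcomp Require Import all_classical all_reals all_analysis.
From mathcomp Require Import complex.
From mathcomp Require Import ring lra.
Import numFieldNormedType.Exports.
Import Order.TTheory GRing.Theory Num.Theory.
Local Open Scope classical_set_scope.
Local Open Scope ring_scope.
Set Implicit Arguments. Unset Strict Implicit. Unset Printing Implicit Defensive.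
Section Ops.
Variables (R : realType) (H : completeNormedModType R[i]).
Local Notation C := (R[i]).

Definition lin (T : H -> H) := forall (a : C) x y, T (a *: x + y) = a *: T x + T y.

Lemma linD T : lin T -> forall x y, T (x + y) = T x + T y.
Proof. by move=> hT x y; have := hT 1 x y; rewrite !scale1r. Qed.
Lemma lin0 T : lin T -> T 0 = 0.
Proof.
move=> hT; have h := linD hT 0 0; rewrite addr0 in h.
by apply: (addrI (T 0)); rewrite -h addr0.
Qed.
Lemma linZ T : lin T -> forall a x, T (a *: x) = a *: T x.
Proof. by move=> hT a x; have := hT a x 0; rewrite (lin0 hT) !addr0. Qed.
Lemma linN T : lin T -> forall x, T (- x) = - T x.
Proof. by move=> hT x; rewrite -scaleN1r linZ // scaleN1r. Qed.
Lemma linB T : lin T -> forall x y, T (x - y) = T x - T y.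
Proof. by move=> hT x y; rewrite linD // linN. Qed.

End Ops.

Section Hil.
Variables (R : realType) (H : completeNormedModType R[i]).
Variables (ip : H -> H -> R[i]) (hip : is_inner_product ip).
Local Notation C := (R[i]).

Lemma conjE (z : C) : z^* = (z^*)%C.
Proof. by case: z. Qed.

Definition nrm {V : normedZmodType C} (v : V) : R := complex.Re `|v|.

Lemma normE {V : normedZmodType C} (v : V) : `|v| = ((nrm v)%:C)%C.
Proof.
have := normr_ge0 v; rewrite lecE => /andP[/eqP him _].
rewrite /nrm; case: (`|v|) him => a b /= ->. by [].
Qed.

Lemma nrm_ge0 {V : normedZmodType C} (v : V) : 0 <= nrm v.
Proof. by have := normr_ge0 v; rewrite normE lecR. Qed.

Lemma ipDl x y z : ip (x + y) z = ip x z + ip y z.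
Proof. by case: hip => h _ _; have := h 1 x y z; rewrite scale1r mul1r. Qed.
Lemma ip0l z : ip 0 z = 0.
Proof. have h := ipDl 0 0 z; rewrite addr0 in h. by apply: (addrI (ip 0 z)); rewrite -h addr0. Qed.
Lemma ipZl a x z : ip (a *: x) z = a * ip x z.
Proof. by case: hip => h _ _; have := h a x 0 z; rewrite addr0 ip0l addr0. Qed.
Lemma ipNl x z : ip (- x) z = - ip x z.
Proof. by rewrite -scaleN1r ipZl mulN1r. Qed.
Lemma ipBl x y z : ip (x - y) z = ip x z - ip y z.
Proof. by rewrite ipDl ipNl. Qed.
Lemma ipC x y : ip y x = (ip x y)^*.
Proof. by case: hip. Qed.
Lemma ipDr x y z : ip x (y + z) = ip x y + ip x z.
Proof. by rewrite ipC ipDl rmorphD /= -!ipC. Qed.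
Lemma ipZr a x y : ip x (a *: y) = a^* * ip x y.
Proof. by rewrite ipC ipZl rmorphM /= -ipC. Qed.
Lemma ip0r x : ip x 0 = 0.
Proof. by rewrite ipC ip0l conjC0. Qed.
Lemma ipBr x y z : ip x (y - z) = ip x y - ip x z.
Proof. by rewrite -scaleN1r ipDr ipZr rmorphN1 /= mulN1r. Qed.
Lemma ipxx x : ip x x = `|x| ^+ 2.
Proof. by case: hip. Qed.
Lemma ipxxR x : ip x x = ((nrm x ^+ 2)%:C)%C.
Proof. by rewrite ipxx normE rmorphXn. Qed.
Lemma ipxx_eq0 x : (ip x x == 0) = (x == 0).
Proof. by rewrite ipxx expf_eq0 /= normr_eq0. Qed.

Lemma ipyy_conj y : (ip y y)^* = ip y y.
Proof. by rewrite -ipC. Qed.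

Lemma ip_proj u y : ip y y != 0 ->
  ip (u - (ip u y / ip y y) *: y) (u - (ip u y / ip y y) *: y)
  = ip u u - ip u y * (ip u y)^* / ip y y.
Proof.
move=> hy; rewrite !ipBl !ipBr !ipZl !ipZr rmorphM /= fmorphV /= ipyy_conj.
rewrite (ipC u y); field; exact: hy.
Qed.

Lemma ipxx_ge0 x : 0 <= ip x x.
Proof. by rewrite ipxx exprn_ge0. Qed.

Lemma ipyy_gt0 y : y != 0 -> 0 < ip y y.
Proof. by move=> hy; rewrite lt_def ipxx_eq0 hy ipxx_ge0. Qed.

Lemma CS u y : `|ip u y| <= `|u| * `|y|.
Proof.
have [->|hy] := eqVneq y 0; first by rewrite ip0r normr0 normr0 mulr0.
have hyy := ipyy_gt0 hy.
have h0 := ipxx_ge0 (u - (ip u y / ip y y) *: y).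
rewrite ip_proj ?gt_eqF // subr_ge0 ler_pdivrMr // in h0.
rewrite -(@ler_pXn2r _ 2) //; last by rewrite nnegrE mulr_ge0.
  by rewrite normCK exprMn -!ipxx.
Qed.

Lemma nrmD {V : normedZmodType C} (u v : V) : nrm (u + v) <= nrm u + nrm v.
Proof. by have := ler_normD u v; rewrite !normE -rmorphD lecR. Qed.

Lemma paral (u v : H) : nrm (u + v) ^+ 2 + nrm (u - v) ^+ 2 = 2 * nrm u ^+ 2 + 2 * nrm v ^+ 2.
Proof.
apply: complexI; rewrite !rmorphD !rmorphM /= -!normE -!expr2 -!ipxx.
rewrite !ipBl !ipBr !ipDl !ipDr.
rewrite rmorph_nat.
ring.
Qed.

Lemma nrm_gt0_eps (eps : C) : 0 < eps -> exists2 er : R, 0 < er & eps = (er%:C)%C.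
Proof.
move=> h; have := h; rewrite ltcE => /andP[/eqP him hre].
by exists (complex.Re eps) => //; case: eps him {h hre} => a b /= ->.
Qed.

Lemma orth_exists (S : set H) x : closed_subspace S -> ~ S x ->
  exists y, y != 0 /\ forall s, S s -> ip s y = 0.
Proof.
case=> S0 Slin Scl nSx.
have SD u v : S u -> S v -> S (u + v).
  by move=> hu hv; have := Slin 1 u v hu hv; rewrite scale1r.
have SZ a u : S u -> S (a *: u).
  by move=> hu; have := Slin a u 0 hu S0; rewrite addr0.
pose E := [set r : R | exists2 s, S s & r = nrm (x - s) ^+ 2].
have hE : has_inf E.
  split; first by exists (nrm (x - 0) ^+ 2); exists 0.
  by exists 0 => r [s _ ->]; rewrite exprn_ge0 // nrm_ge0.
pose d2 := inf E.
have d20 : 0 <= d2.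
  apply: lb_le_inf; first by exists (nrm (x - 0) ^+ 2); exists 0.
  by move=> r [s _ ->]; rewrite exprn_ge0 // nrm_ge0.
have d2le s : S s -> d2 <= nrm (x - s) ^+ 2.
  by move=> hs; apply: ge_inf; [case: hE | exists s].
pose B (e : R) := [set s | S s /\ nrm (x - s) ^+ 2 < d2 + e].
have Bne e : 0 < e -> exists s, B e s.
  move=> e0; have [r [s hs ->] hr] := inf_adherent e0 hE.
  by exists s.
pose F := filter_from [set e : R | 0 < e] B.
have FF : Filter F.
  apply: filter_from_filter; first by exists 1; exact: ltr01.
  move=> i j i0 j0; exists (Order.min i j); first by rewrite /= lt_min i0 j0.
  move=> s [hs hlt]; split; split => //.
    by apply: (lt_le_trans hlt); rewrite lerD2l ge_min lexx.
  by apply: (lt_le_trans hlt); rewrite lerD2l ge_min lexx orbT.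
have PF : ProperFilter F.
  apply: filter_from_proper => e e0; have [s hs] := Bne e e0; by exists s.
have est e s t : B e s -> B e t -> nrm (s - t) ^+ 2 < 4 * e.
  move=> [hs hs'] [ht ht'].
  pose m := 2^-1 *: (s + t).
  have hm : S m by apply: SZ; apply: SD.
  have h1 : (x - s) + (x - t) = 2 *: (x - m).
    rewrite /m scalerBr scalerA mulfV ?pnatr_eq0 // scale1r scaler_nat mulr2n.
    by rewrite opprD !addrA; congr (_ - _); rewrite addrAC.
  have h2 : (x - s) - (x - t) = t - s.
    by rewrite opprB addrC addrA subrK.
  have := paral (x - s) (x - t); rewrite h1 h2.
  have -> : nrm (2 *: (x - m)) = 2 * nrm (x - m).
    apply: complexI; rewrite rmorphM /= -!normE normrZ rmorph_nat.
    by rewrite ger0_norm.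
  have -> : nrm (t - s) = nrm (s - t) by rewrite /nrm distrC.
  have := d2le m hm.
  have := nrm_ge0 (x - m).
  lra.
have cauF : cauchy F.
  apply/cauchyP => eps /nrm_gt0_eps [er er0 ->].
  have e0 : 0 < er ^+ 2 / 4 by rewrite divr_gt0 // exprn_gt0.
  have [s0 hs0] := Bne _ e0.
  exists s0; exists (er ^+ 2 / 4) => // t ht.
  rewrite -ball_normE /ball_ /= normE ltcR.
  have := est _ _ _ hs0 ht; have := nrm_ge0 (s0 - t).
  rewrite mulrC mulfVK ?pnatr_eq0 // => n0 hlt.
  nra.
have cF : cvg F := @cauchy_cvg _ F PF cauF.
set s0 := lim F in cF.
have FS : F S by exists 1; [exact: ltr01 | move=> s []].
have Ss0 : S s0.
  apply: (@closed_cvg _ _ F PF id S Scl); [exact: FS | exact: cF].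
have up e : 0 < e -> nrm (x - s0) ^+ 2 <= d2 + e.
  move=> e0.
  have d2e : 0 <= d2 + e.
    by rewrite addr_ge0 // ltW.
  pose r := Num.sqrt (d2 + e).
  have r0 : 0 <= r by rewrite sqrtr_ge0.
  have hr : r ^+ 2 = d2 + e by rewrite sqr_sqrtr.
  suff : nrm (x - s0) <= r.
    by move=> hle; rewrite -hr; have := nrm_ge0 (x - s0); nra.
  apply/ler_addgt0Pr => del del0.
  have hnear := @cvgr_dist_lt _ _ _ F FF id s0 cF (del%:C)%C.
  rewrite ltcR in hnear; have {}hnear := hnear del0.
  have FBe : F (B e) by exists e.
  have [t [ht1 ht2]] := filter_ex (filterI hnear FBe).
  move: ht1; rewrite /= normE ltcR => ht1.
  have tri : nrm (x - s0) <= nrm (x - t) + nrm (t - s0).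
    by have := nrmD (x - t) (t - s0); rewrite addrA subrK.
  move: ht2 => [_ ht2].
  have : nrm (x - t) < r.
    rewrite ltNge; apply/negP => hle.
    have := nrm_ge0 (x - t); nra.
  have : nrm (t - s0) = nrm (s0 - t) by rewrite /nrm distrC.
  lra.
have dist : nrm (x - s0) ^+ 2 = d2.
  apply/eqP; rewrite eq_le d2le // andbT.
  apply/ler_addgt0Pr => e e0; exact: up.
exists (x - s0); split.
  by rewrite subr_eq0; apply/eqP => xs; apply: nSx; rewrite xs.
move=> t St; have [->|tn0] := eqVneq t 0; first by rewrite ip0l.
set y := x - s0.
suff : ip y t = 0 by move=> h; rewrite ipC h conjC0.
have htt := ipyy_gt0 tn0.
set l := ip y t / ip t t.
have hS : S (s0 + l *: t) by apply: SD => //; apply: SZ.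
have := d2le _ hS.
have -> : x - (s0 + l *: t) = y - l *: t by rewrite opprD addrA.
rewrite -lecR -ipxxR ip_proj ?gt_eqF // -dist -ipxxR -/y.
rewrite -subr_ge0 addrAC subrr add0r oppr_ge0 => hle.
have hge : 0 <= ip y t * (ip y t)^* / ip t t.
  by rewrite divr_ge0 ?mul_conjC_ge0 // ltW.
have : ip y t * (ip y t)^* / ip t t = 0 by apply/le_anti; rewrite hle hge.
move/eqP; rewrite mulf_eq0 invr_eq0 (gt_eqF htt) orbF mul_conjC_eq0.
by move/eqP.
Qed.

Lemma lip_cont (V : normedModType C) (f : H -> V) (K : R) : 0 <= K ->
  (forall u v, nrm (f u - f v) <= K * nrm (u - v)) -> continuous f.
Proof.
move=> K0 hf u; apply/cvgrPdist_lt => eps /nrm_gt0_eps [er er0 ->].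
have d0 : 0 < er / (K + 1) by rewrite divr_gt0 // ltr_wpDl.
have := @cvgr_dist_lt _ _ _ (nbhs u) (nbhs_filter u) id u cvg_id ((er / (K + 1))%:C)%C.
rewrite ltcR => /(_ d0); apply: filterS => v; rewrite /= !normE !ltcR => hv.
have := hf u v; have := nrm_ge0 (u - v).
rewrite ltr_pdivlMr ?ltr_wpDl // in hv.
nra.
Qed.

Lemma CSr w y : nrm (ip w y) <= nrm w * nrm y.
Proof. by have := CS w y; rewrite !normE -rmorphM lecR. Qed.

Definition r1 (x y : H) : H -> H := fun u => ip u y *: x.

Lemma r1_bounded x y : bounded_op (r1 x y).
Proof.
split.
  by move=> a u v; rewrite /r1 ipDl ipZl scalerDl scalerA.
apply: (@lip_cont _ _ (nrm y * nrm x)).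
  by rewrite mulr_ge0 // nrm_ge0.
move=> u v; rewrite /r1 -scalerBl -ipBl.
have -> : nrm (ip (u - v) y *: x) = nrm (ip (u - v) y) * nrm x.
  by apply: complexI; rewrite rmorphM /= -!normE normrZ.
have := CSr (u - v) y; have := nrm_ge0 x; have := nrm_ge0 (u - v);
  have := nrm_ge0 y; have := nrm_ge0 (ip (u - v) y).
nra.
Qed.


Lemma not_setT (M : set H) : M <> setT -> exists x, ~ M x.
Proof.
move=> hM; apply: contrapT => hn; apply: hM; apply/seteqP; split => // x _.
by apply: contrapT => hx; apply: hn; exists x.
Qed.

Lemma central_scalar (N : set (set H)) (hN : nest N) (hne : exists u : H, u != 0)
  (z : H -> H) (zl : lin z) (zc : continuous z)
  (zcom : forall T, nest_algebra N T -> forall u, z (T u) = T (z u)) :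
  exists mu : C, forall u, z u = mu *: u.
Proof.
case: hN => Nsub [N0 NT] Nch Ncap Nspan.
have subZ M a x : N M -> M x -> M (a *: x).
  by move=> NM Mx; case: (Nsub M NM) => M0 Ml _; have := Ml a x 0 Mx M0; rewrite addr0.
have sub0 M : N M -> M 0 by move=> NM; case: (Nsub M NM).
have r1A x y : (forall M, N M -> M x \/ forall u, M u -> ip u y = 0) ->
    nest_algebra N (r1 x y).
  move=> h; split; first exact: r1_bounded.
  move=> M u NM Mu; rewrite /r1; case: (h M NM) => [Mx|hy]; first exact: subZ.
  by rewrite hy // scale0r; exact: sub0.
have r1M M x y : N M -> M x -> (forall u, M u -> ip u y = 0) ->
    nest_algebra N (r1 x y).
  move=> NM Mx hy; apply: r1A => M' NM'; case: (Nch M M' NM NM') => hs.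
    by left; apply: hs.
  by right => u /hs; exact: hy.
have eig x y : y != 0 -> nest_algebra N (r1 x y) ->
    z x = (ip (z y) y / ip y y) *: x.
  move=> yn0 hA; have := zcom _ hA y; rewrite /r1 (linZ zl) => h.
  have hyy : ip y y != 0 by rewrite ipxx_eq0.
  by rewrite -mulrC -scalerA -h scalerA mulVf // scale1r.
pose F := [set M | N M /\ M <> setT].
pose L := closed_span F.
have NL : N L by apply: Nspan => M [].
have FL M : F M -> M `<=` L.
  by move=> FM u Mu S [_ hS]; apply: hS; exists M.
have Lsub K : closed_subspace K -> (forall M, F M -> M `<=` K) -> L `<=` K.
  by move=> hK hMK u Lu; apply: Lu; split => // v [M FM Mv]; exact: hMK M FM v Mv.
have cl0 : closed [set (0 : H)] by case: (Nsub _ N0).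
have [LT|LT] := pselect (L = setT); last first.
  have [x0 nLx0] := not_setT LT.
  have [y [yn0 hy]] := orth_exists (Nsub L NL) nLx0.
  exists (ip (z y) y / ip y y) => u; apply: eig => //.
  apply: r1A => M NM; have [->|MT] := pselect (M = setT); first by left.
  by right => v Mv; apply: hy; apply: (FL M).
have [M0 [[NM0 M0T] [x0 [M0x0 x0n0]]]] :
    exists M0, F M0 /\ exists x0, M0 x0 /\ x0 != 0.
  apply: contrapT => hn; case: hne => u un0; move/negP: un0; apply.
  have : L u by rewrite LT.
  move=> /(_ [set 0]) -> //; split; first exact: Nsub.
  move=> v [M FM Mv] /=; apply/eqP; apply: contrapT => vn0; apply: hn.
  by exists M; split => //; exists v; split => //; apply/negP.
have [y0 [y0n0 hy0]] : exists y, y != 0 /\ forall s, M0 s -> ip s y = 0.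
  have [x1 nx1] := not_setT M0T; exact: orth_exists (Nsub M0 NM0) nx1.
pose mu := ip (z y0) y0 / ip y0 y0.
have onM0 x : M0 x -> z x = mu *: x.
  by move=> M0x; apply: eig => //; apply: (r1M M0).
have onF M : F M -> forall x, M x -> z x = mu *: x.
  move=> [NM MT] x Mx; case: (Nch M M0 NM NM0) => hs; first by apply: onM0; apply: hs.
  have [y [yn0 hy]] : exists y, y != 0 /\ forall s, M s -> ip s y = 0.
    have [x1 nx1] := not_setT MT; exact: orth_exists (Nsub M NM) nx1.
  have eM w : M w -> z w = (ip (z y) y / ip y y) *: w.
    by move=> Mw; apply: eig => //; apply: (r1M M).
  have e1 := eM x0 (hs _ M0x0); rewrite onM0 // in e1.
  have : (mu - ip (z y) y / ip y y) *: x0 == 0 by rewrite scalerBl e1 subrr.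
  rewrite scaler_eq0 (negbTE x0n0) orbF subr_eq0 => /eqP ->.
  exact: eM.
exists mu.
pose K := [set u | z u = mu *: u].
have hK : closed_subspace K.
  split; first by rewrite /K /= (lin0 zl) scaler0.
    by move=> a u v Ku Kv; rewrite /K /= zl Ku Kv scalerDr !scalerA mulrC.
  have -> : K = (fun u => z u - mu *: u) @^-1` [set 0].
    apply/seteqP; split => u; rewrite /K /= => h; first by rewrite h subrr.
    by apply/eqP; rewrite -subr_eq0 h.
  apply: preimage_closed => // u _.
  apply: continuousB; first exact: zc.
  apply: (@continuousZ _ _ _ (fun=> mu) id); [exact: cst_continuous | exact: cvg_id].
move=> u; have Lu : L u by rewrite LT.
exact: (Lsub K hK (fun M FM v Mv => onF M FM v Mv) u Lu).
Qed.
End Hil.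

Section Main.
Variables (R : realType) (H : completeNormedModType R[i]).
Local Notation C := (R[i]).

Lemma lin_sub (S T : H -> H) : lin S -> lin T -> lin (fun u => S u - T u).
Proof. by move=> hS hT a x y; rewrite hS hT scalerBr opprD addrACA. Qed.

Lemma lin_comp (S T : H -> H) : lin S -> lin T -> lin (fun u => S (T u)).
Proof. by move=> hS hT a x y; rewrite hT hS. Qed.

Lemma dbl_inj (v w : H) : v + v = w + w -> v = w.
Proof.
move=> h; have e (x : H) : x + x = (2:C) *: x by rewrite scaler_nat mulr2n.
rewrite !e in h.
have := congr1 (fun t => (2:C)^-1 *: t) h.
by rewrite /= !scalerA mulVf ?pnatr_eq0 // !scale1r.
Qed.

Lemma A_id (N : set (set H)) : nest_algebra N (fun u => u).
Proof.
split; last by move=> M x _.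
split; first by move=> a x y.
by move=> x; exact: cvg_id.
Qed.

Lemma A_mul (N : set (set H)) S T : nest_algebra N S -> nest_algebra N T ->
  nest_algebra N (op_mul S T).
Proof.
move=> [[Sl Sc] Si] [[Tl Tc] Ti]; split.
  split; first exact: (lin_comp Sl Tl).
  by move=> x; apply: continuous_comp; [exact: Tc | exact: Sc].
by move=> M x NM Mx; rewrite /op_mul; apply: Si => //; apply: Ti.
Qed.

Lemma A_add (N : set (set H)) (hN : nest N) S T : nest_algebra N S -> nest_algebra N T ->
  nest_algebra N (op_add S T).
Proof.
move=> [[Sl Sc] Si] [[Tl Tc] Ti]; split.
  split.
    by move=> a x y; rewrite /op_add Sl Tl scalerDr addrACA.
  move=> x.
  have := @continuousD _ _ _ S T x (Sc x) (Tc x).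
  done.
move=> M x NM Mx; rewrite /op_add.
case: hN => Nsub _ _ _ _; case: (Nsub M NM) => _ Ml _.
by have := Ml 1 (S x) (T x) (Si M x NM Mx) (Ti M x NM Mx); rewrite scale1r.
Qed.
End Main.

Theorem corollary3p9 (R : realType) (H : completeNormedModType R[i])
  (ip : H -> H -> R[i]) (hip : is_inner_product ip) (hdim : dim_ge2 H)
  (N : set (set H)) (hN : nest N) :
  forall f : (H -> H) -> (H -> H),
    JCent (nest_algebra N) f <-> Cent (nest_algebra N) f.
Proof.
move=> f.
have AI := A_id N.
have Amul := @A_mul _ _ N.
have Aadd := A_add hN.
split.
- case=> [[fA fl] fj].
  pose c := f (fun u : H => u).
  have Ac : nest_algebra N c := fA _ AI.
  have cl : lin c by case: Ac => [[]].
  have F2 x : nest_algebra N x -> forall u, f x u + f x u = c (x u) + x (c u).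
    move=> Ax u.
    have e : op_jordan (fun u : H => u) x = op_add (op_scale 1 x) x.
      by apply: funext => v; rewrite /op_jordan /op_add /op_mul /op_scale scale1r.
    have := fj _ _ AI Ax; rewrite e fl // => /(congr1 (fun g => g u)).
    by rewrite /op_jordan /op_add /op_mul /op_scale scale1r.
  have KEY x y : nest_algebra N x -> nest_algebra N y ->
      forall u, x (c (y u)) + y (c (x u)) = c (y (x u)) + x (y (c u)).
    move=> Ax Ay u.
    have Aj : nest_algebra N (op_jordan x y) := Aadd _ _ (Amul _ _ Ax Ay) (Amul _ _ Ay Ax).
    have yl : lin y by case: Ay => [[]].
    have e1 := F2 _ Aj u.
    have e2 := congr1 (fun g => g u) (fj x y Ax Ay).
    rewrite /= in e2; rewrite e2 /op_jordan /op_add /op_mul in e1.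
    rewrite addrACA -(linD yl) !(F2 x Ax) (linD yl) (linD cl) in e1.
    by move: e1; rewrite -!addrA => /addrI; rewrite !addrA => /addIr.
  have hne : exists u : H, u != 0.
    case: hdim => a [b hab]; exists a; apply/eqP => a0.
    by case: (hab 1 0 _) => [|/eqP]; [rewrite a0 scaler0 scale0r addr0 | rewrite oner_eq0].
  have COMM y : nest_algebra N y -> forall u, c (y u) = y (c u).
    move=> Ay.
    have yl : lin y by case: Ay => [[]].
    have cc : continuous c by case: Ac => [[]].
    have zsc (w : H -> H) : nest_algebra N w ->
        exists mu : R[i], forall u, c (w u) - w (c u) = mu *: u.
      move=> Aw; have wl : lin w by case: Aw => [[]].
      have wc : continuous w by case: Aw => [[]].
      apply: (central_scalar hip hN hne (z := fun u => c (w u) - w (c u))).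
      + exact: lin_sub (lin_comp cl wl) (lin_comp wl cl).
      + move=> x.
        have := @continuousB _ _ _ (fun u => c (w u)) (fun u => w (c u)) x.
        apply.
          by apply: continuous_comp; [exact: wc | exact: cc].
        by apply: continuous_comp; [exact: cc | exact: wc].
      + move=> T AT u; have Tl : lin T by case: AT => [[]].
        rewrite (linB Tl).
        have k := KEY T w AT Aw u.
        have -> : c (w (T u)) = T (c (w u)) + w (c (T u)) - T (w (c u)).
          by rewrite k addrK.
        by rewrite addrAC addrK.
    have [lam hl] := zsc y Ay.
    have [lam2 hl2] := zsc _ (Amul _ _ Ay Ay).
    have lam0 : lam = 0.
      case: hne => u0 u0n0.
      apply: contrapT => lamn0.
      have hll : lam + lam != 0.
        by rewrite -mulr2n mulrn_eq0 /=; apply/eqP.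
      have ey u : y u = (lam2 / (lam + lam)) *: u.
        have h : lam2 *: u = (lam + lam) *: y u.
          have h2 := hl2 u; rewrite /op_mul in h2; rewrite -h2.
          have -> : c (y (y u)) - y (y (c u)) =
              (c (y (y u)) - y (c (y u))) + y (c (y u) - y (c u)).
            by rewrite (linB yl) addrA subrK.
          by rewrite hl hl (linZ yl) scalerDl.
        have -> : y u = (lam + lam)^-1 *: ((lam + lam) *: y u).
          by rewrite scalerA mulVf // scale1r.
        by rewrite -h scalerA mulrC.
      have := hl u0; rewrite !ey (linZ cl) subrr => /esym/eqP.
      rewrite scaler_eq0 (negbTE u0n0) orbF => /eqP.
      exact: lamn0.
    move=> u; have := hl u; rewrite lam0 scale0r => /eqP; rewrite subr_eq0 => /eqP.
    done.
  have FX x : nest_algebra N x -> forall u, f x u = c (x u).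
    move=> Ax u; apply: dbl_inj; rewrite F2 // (COMM x Ax u).
    done.
  split; first by split.
  move=> x y Ax Ay; split; apply: funext => u.
    by rewrite (FX _ (Amul _ _ Ax Ay)) /op_mul FX.
  rewrite (FX _ (Amul _ _ Ax Ay)) /op_mul FX //.
  exact: COMM.
- case=> [[fA fl] fc]; split; first by split.
  move=> x y Ax Ay.
  have e : op_jordan x y = op_add (op_scale 1 (op_mul x y)) (op_mul y x).
    by apply: funext => u; rewrite /op_jordan /op_add /op_scale scale1r.
  rewrite e fl; [|exact: Amul|exact: Amul].
  have [h1 _] := fc x y Ax Ay; have [_ h2] := fc y x Ay Ax.
  rewrite h1 h2; apply: funext => u.
  by rewrite /op_jordan /op_add /op_scale /op_mul scale1r.
Qed.
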